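(* Fix $\mathtt d\ge1$ and $\mathtt L\in\mathbb N$. There are infinitely many $\mathtt L$-generic sets. More precisely, for $R\ge1$ let $B_R$ be the set of all ordered $\mathtt d$-tuples of integers $\mathcal S=(\mathtt m_1<\dots<\mathtt m_{\mathtt d})$ with $\max_i|\mathtt m_i|\le R$, and let $G_R\subseteq B_R$ be the subset of those which are $\mathtt L$-generic. Then $\lim_{R\to\infty}|G_R|/|B_R|=1$.
   Context: For integers $\mathtt m_1<\dots<\mathtt m_{\mathtt d}$ let $\mathcal S_{0n}=\{(\mathtt m_i,n):1\le i\le\mathtt d\}$ for $n\in\mathbb Z$; for $1\le i<j\le\mathtt d$ let $\mathscr C^\pm_{i,j}=\{(m,n)\in\mathbb Z^2:(m-\mathtt m_i)(m-\mathtt m_j)+n^2=0,\ \pm n>0\}$, $\mathscr C_{i,j}=\mathscr C^+_{i,j}\cup\mathscr C^-_{i,j}$, $\mathscr S=\bigcup_{n\ne0}\mathcal S_{0n}$, $\mathscr C=\bigcup_{i<j}\mathscr C_{i,j}$. The tuple is generic if $\mathscr S\cap\mathscr C=\emptyset$ and $\mathscr C_{i,j}\cap\mathscr C_{i',j'}=\emptyset$ for all $\{i,j\}\ne\{i',j'\}$; it is $\mathtt L$-generic if it is generic and $\sum_i\ell_i\mathtt m_i\ne0$ for all $\ell\in\mathbb Z^{\mathtt d}$ with $0<\sum_i|\ell_i|\le\mathtt L$. *)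

(* Defs.v *)
From mathcomp Require Import all_boot all_order all_algebra.
From mathcomp Require Import boolp.
Set Implicit Arguments. Unset Strict Implicit. Unset Printing Implicit Defensive.
Import Order.TTheory GRing.Theory Num.Theory.
Local Open Scope ring_scope.

Definition inS0n (d : nat) (m : 'I_d -> int) (n : int) (p : int * int) : Prop :=
  exists i : 'I_d, p = (m i, n).

Definition inS (d : nat) (m : 'I_d -> int) (p : int * int) : Prop :=
  exists n : int, n != 0 /\ inS0n m n p.

Definition inCp (d : nat) (m : 'I_d -> int) (i j : 'I_d) (p : int * int) : Prop :=
  (p.1 - m i) * (p.1 - m j) + p.2 ^+ 2 = 0 /\ 0 < p.2.
Definition inCm (d : nat) (m : 'I_d -> int) (i j : 'I_d) (p : int * int) : Prop :=
  (p.1 - m i) * (p.1 - m j) + p.2 ^+ 2 = 0 /\ 0 < - p.2.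
Definition inCij (d : nat) (m : 'I_d -> int) (i j : 'I_d) (p : int * int) : Prop :=
  inCp m i j p \/ inCm m i j p.

Definition inC (d : nat) (m : 'I_d -> int) (p : int * int) : Prop :=
  exists i j : 'I_d, (i < j)%N /\ inCij m i j p.

Definition generic (d : nat) (m : 'I_d -> int) : Prop :=
  (forall p, ~ (inS m p /\ inC m p)) /\
  (forall (i j i' j' : 'I_d) p, (i < j)%N -> (i' < j')%N ->
     [set i; j] != [set i'; j'] -> ~ (inCij m i j p /\ inCij m i' j' p)).

Definition Lgeneric (d L : nat) (m : 'I_d -> int) : Prop :=
  generic m /\
  (forall l : 'I_d -> int,
     (0 < \sum_(i < d) `|l i|)%N -> (\sum_(i < d) `|l i| <= L)%N ->
     \sum_(i < d) l i * m i != 0).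

(* integer tuples with entries in [-R, R], encoded by k |-> k - R *)
Definition toZ (d R : nat) (f : {ffun 'I_d -> 'I_(2 * R + 1)}) : 'I_d -> int :=
  fun i => (nat_of_ord (f i))%:Z - R%:Z.

Definition increasing (d : nat) (m : 'I_d -> int) : bool :=
  [forall i : 'I_d, forall j : 'I_d, (i < j)%N ==> (m i < m j)].

Definition B_R (d R : nat) : {set {ffun 'I_d -> 'I_(2 * R + 1)}} :=
  [set f | increasing (toZ f)].

Definition G_R (d L R : nat) : {set {ffun 'I_d -> 'I_(2 * R + 1)}} :=
  [set f in B_R d R | `[< Lgeneric L (toZ f) >]].

(* Main.v *)
Require Import Defs.
From mathcomp Require Import all_boot all_order all_algebra.
From mathcomp Require Import zify ring lra.
From mathcomp Require Import boolp.
Import Order.TTheory GRing.Theory Num.Theory.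
Set Implicit Arguments. Unset Strict Implicit. Unset Printing Implicit Defensive.

Definition issq (x : nat) : bool := [exists w : 'I_x.+1, (w * w == x)%N].

Lemma issqP x : reflect (exists w, w * w = x)%N (issq x).
Proof.
apply: (iffP existsP) => [[w /eqP <-]|[w <-]]; first by exists w.
have hw : (w < (w * w).+1)%N by case: w => [|w] //; nia.
by exists (Ordinal hw); rewrite /=.
Qed.

Lemma gcd_sq p q : gcdn (p * p) (q * q) = (gcdn p q * gcdn p q)%N.
Proof.
have [g0|gpos] := posnP (gcdn p q).
  have := gcdn_gt0 p q; rewrite g0 /=.
  by case: p g0 => [|p] //; case: q => [|q] //.
set g := gcdn p q in gpos *.
have ep : p = (p %/ g * g)%N by rewrite divnK // dvdn_gcdl.
have eq : q = (q %/ g * g)%N by rewrite divnK // dvdn_gcdr.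
set p' := p %/ g in ep; set q' := q %/ g in eq.
have cp : coprime p' q'.
  have : (gcdn p' q' * g = g * 1)%N by rewrite muln_gcdl -ep -eq muln1.
  by rewrite mulnC => /eqP; rewrite eqn_mul2l (negbTE (lt0n_neq0 gpos)) /coprime.
rewrite ep eq.
have -> : (p' * g * (p' * g) = (p' * p') * (g * g))%N by ring.
have -> : (q' * g * (q' * g) = (q' * q') * (g * g))%N by ring.
rewrite -muln_gcdl.
have : coprime (p' * p') (q' * q') by rewrite coprimeMl !coprimeMr cp.
by rewrite /coprime => /eqP->; rewrite mul1n.
Qed.

Lemma sq_struct u s v : (0 < u)%N -> issq (u * s) ->
  (forall s', 0 < s' -> issq (u * s') -> s <= s')%N -> (0 < s)%N -> (0 < v)%N ->
  issq (u * v) -> exists t, v = (s * (t * t))%N.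
Proof.
move=> u0 /issqP[p hp] hmin s0 v0 /issqP[q hq].
set g := gcdn s v.
have g0 : (0 < g)%N by rewrite gcdn_gt0 s0.
have hg : issq (u * g).
  apply/issqP; exists (gcdn p q); rewrite -gcd_sq hp hq /g muln_gcdr //.
have sg := hmin _ g0 hg.
have gs : (g <= s)%N by apply: dvdn_leq => //; rewrite dvdn_gcdl.
have gse : g = s by apply/eqP; rewrite eqn_leq gs sg.
have : (s %| v)%N by rewrite -gse dvdn_gcdr.
case/dvdnP=> t' vt.
have p0 : (0 < p)%N by case: p hp => [|p] //; nia.
have : (p ^ 2 %| q ^ 2)%N.
  apply/dvdnP; exists t'; rewrite !expnS !expn0 !muln1 hq hp vt; ring.
rewrite dvdn_pexp2r // => /dvdnP[r qr].
exists r; rewrite vt.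
have : (p * p * t' = p * p * (r * r))%N.
  have e1 : (q * q = p * p * (r * r))%N by rewrite qr; ring.
  rewrite -e1 hq vt hp; ring.
move/eqP; rewrite eqn_mul2l muln_eq0 (negbTE (lt0n_neq0 p0)) /= => /eqP->.
ring.
Qed.

Lemma count_sq n K u c : (0 < u)%N -> (n <= K * K)%N ->
  (#|[set b : 'I_n | (c < b)%N && issq (u * (b - c))]| <= K)%N.
Proof.
move=> u0 nK.
have ex : exists s, (0 < s)%N && issq (u * s).
  by exists u; rewrite u0; apply/issqP; exists u.
case: (ex_minnP ex) => s /andP[s0 hs] hmin.
case: K nK => [|k] nK.
  rewrite leqn0 in nK; move/eqP: nK => n0; subst n.
  by rewrite leqn0; apply/eqP/eq_card0 => -[].
set A := [set b : 'I_n | _].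
have key : forall b, b \in A -> exists t : 'I_k.+1, s * (t * t) = b - c.
  move=> b; rewrite inE => /andP[cb hb].
  have [t ht] := sq_struct u0 hs (fun s' a b => hmin s' (introT andP (conj a b))) s0
     (ltac:(lia) : (0 < b - c)%N) hb.
  have tk : (t < k.+1)%N.
    have : (t * t < k.+1 * k.+1)%N.
      apply: (leq_ltn_trans _ (leq_trans (ltn_ord b) nK)).
      apply: (leq_trans _ (leq_subr c b)); rewrite ht; nia.
    move=> h; nia.
  by exists (Ordinal tk).
pose f (b : 'I_n) := odflt ord0 [pick t : 'I_k.+1 | s * (t * t) == b - c].
have fP : forall b, b \in A -> s * (f b * f b) = b - c.
  move=> b /key[t ht]; rewrite /f; case: pickP => [t' /eqP //|/(_ t)].
  by rewrite ht eqxx.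
rewrite -[k.+1]card_ord; apply: (@leq_card_in _ _ f) => b b' hb hb' e.
have := fP _ hb; have := fP _ hb'; rewrite e => -> h.
apply: val_inj; move: hb hb'; rewrite !inE => /andP[cb _] /andP[cb' _]; change (nat_of_ord b = nat_of_ord b'); lia.
Qed.

Lemma card_pair (X Y : finType) (A : {set X * Y}) :
  #|A| = (\sum_(x : X) #|[set y | (x, y) \in A]|)%N.
Proof.
rewrite -sum1_card big_mkcond /=.
rewrite (eq_bigr (fun p => (fun x y => if (x, y) \in A then 1%N else 0%N) p.1 p.2)); last by case.
rewrite -(pair_big xpredT xpredT (fun x y => if (x, y) \in A then 1%N else 0%N)) /=.
apply: eq_bigr => x _; rewrite -sum1_card.
rewrite [RHS]big_mkcond /=; apply: eq_bigr => y _; by rewrite inE.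
Qed.

Definition P3 n := [set t : 'I_n * 'I_n * 'I_n |
  (t.1.1 < t.1.2)%N && issq ((t.1.2 - t.1.1) * (t.2 - t.1.2)) && (t.1.2 < t.2)%N].

Lemma card_P3 n K : (n <= K * K)%N -> (#|P3 n| <= n * n * K)%N.
Proof.
move=> nK; rewrite card_pair.
have -> : (n * n * K = \sum_(x : 'I_n * 'I_n) K)%N.
  by rewrite sum_nat_const card_prod card_ord.
apply: leq_sum => -[a c] _.
have [ac|ca] := ltnP a c.
  apply: leq_trans (count_sq c (ltac:(lia) : (0 < c - a)%N) nK).
  apply: subset_leq_card; apply/subsetP => b; rewrite !inE /= ac /=.
  by case/andP => -> ->.
rewrite (_ : #|_| = 0%N) //; apply/eq_card0 => b; rewrite !inE /=.
by rewrite ltnNge ca.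
Qed.

Lemma inj_bound (X Y : finType) (A : {set X}) (B : {set Y}) (h : X -> Y) :
  {in A &, injective h} -> (forall x, x \in A -> h x \in B) -> (#|A| <= #|B|)%N.
Proof.
move=> hi hB; rewrite -(card_in_imset hi); apply: subset_leq_card.
by apply/subsetP => y /imsetP[x xA ->]; exact: hB.
Qed.

Definition zJ d n (z : 'I_n) (J : {set 'I_d}) (f : {ffun 'I_d -> 'I_n}) :
  {ffun 'I_d -> 'I_n} := [ffun x => if x \in J then z else f x].

Lemma card_zJ d n (z : 'I_n) (J : {set 'I_d}) :
  (#|zJ z J @: [set: {ffun 'I_d -> 'I_n}]| <= n ^ #|~: J|)%N.
Proof.
apply: leq_trans (subset_leq_card (_ : _ \subset pffun_on z (~: J) predT)) _.
  apply/subsetP => g /imsetP[f _ ->]; apply/pffun_onP; split => //.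
  by apply/supportP => x; rewrite inE negbK ffunE => ->.
by rewrite card_pffun_on /= card_ord.
Qed.

Lemma fiber_bound d n (z : 'I_n) (J : {set 'I_d}) (W : finType) (Ws : {set W})
  (S : {set {ffun 'I_d -> 'I_n}}) (g : {ffun 'I_d -> 'I_n} -> W) :
  {in S &, forall f f', zJ z J f = zJ z J f' -> g f = g f' -> f = f'} ->
  (forall f, f \in S -> g f \in Ws) ->
  (#|S| <= n ^ #|~: J| * #|Ws|)%N.
Proof.
move=> hi hW.
apply: leq_trans (_ : #|setX (zJ z J @: setT) Ws| <= _)%N; last first.
  by rewrite cardsX leq_mul2r card_zJ orbT.
apply: (inj_bound (h := fun f => (zJ z J f, g f))).
  by move=> f f' hf hf' [e1 e2]; exact: hi.
by move=> f hf; rewrite in_setX imset_f ?inE ?hW.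
Qed.

Definition E1 d n (f : {ffun 'I_d -> 'I_n}) (t : 'I_d * 'I_d * 'I_d) : bool :=
  (t.1.1 < t.1.2)%N && (t.1.2 < t.2)%N && (((f t.1.1, f t.1.2), f t.2) \in P3 n).

Lemma card_E1 d n (z : 'I_n) K t : (n <= K * K)%N ->
  (#|[set f | @E1 d n f t]| <= n ^ d.-1 * K)%N.
Proof.
move=> nK; case: t => [[i k] j].
case: (boolP ((i < k)%N && (k < j)%N)) => h; last first.
  rewrite (_ : #|_| = 0%N) //; apply/eq_card0 => f; rewrite !inE /E1 /=.
  by move: h; case: (_ < _)%N; case: (_ < _)%N.
case/andP: h => ik kj.
have d3 : (3 <= d)%N by have := ltn_ord j; lia.
pose J := i |: (k |: [set j]).
have cJ : #|J| = 3.
  have ik' : i != k by apply/eqP => e; subst; rewrite ltnn in ik.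
  have kj' : k != j by apply/eqP => e; subst; rewrite ltnn in kj.
  have ij' : i != j by apply/eqP => e; subst; have := ltn_trans ik kj; rewrite ltnn.
  by rewrite !cardsU1 !inE cards1 (negbTE ik') (negbTE ij') (negbTE kj').
have cCJ : #|~: J| = (d - 3)%N by have := cardsC J; rewrite card_ord cJ; lia.
apply: leq_trans (fiber_bound (z := z) (J := J) (Ws := P3 n)
   (g := fun f => ((f i, f k), f j)) _ _) _.
- move=> f f' _ _ e [e1 e2 e3]; apply/ffunP => x.
  have := congr1 (fun h : {ffun _ -> _} => h x) e; rewrite !ffunE.
  case: (boolP (x \in J)) => // xJ _.
  by move: xJ; rewrite !inE => /orP[/eqP->|/orP[/eqP->|/eqP->]].
- by move=> f; rewrite inE /E1 /= => /andP[_ ->].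
rewrite cCJ.
apply: leq_trans (leq_mul (leqnn _) (card_P3 nK)) _.
have -> : d.-1 = (d - 3).+2 by lia.
by rewrite !expnS; apply: eq_leq; ring.
Qed.

Local Open Scope ring_scope.
Definition circ2 n (a b a' b' x : 'I_n) : bool :=
  (((a, x), b) \in P3 n) &&
  ((x%:Z - a'%:Z) * (x%:Z - b'%:Z) + ((x - a) * (b - x))%N%:Z == 0).

Lemma circ2_uniq n (a b a' b1 b2 x : 'I_n) :
  circ2 a b a' b1 x -> circ2 a b a' b2 x -> b1 = b2.
Proof.
rewrite /circ2 !inE /= => /andP[/andP[/andP[ax _] xb] /eqP e1] /andP[_ /eqP e2].
have hX : (x%:Z - a'%:Z) != 0.
  apply/eqP => h; move: e1; rewrite h mul0r add0r => -[] /eqP; rewrite muln_eq0.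
  by rewrite !subn_eq0 leqNgt ax leqNgt xb.
have : (x%:Z - a'%:Z) * (b2%:Z - b1%:Z) = 0.
  by rewrite mulrBr; apply/eqP; rewrite subr_eq0; apply/eqP; lia.
move/eqP; rewrite mulf_eq0 (negbTE hX) /= subr_eq0 => /eqP h.
by apply: val_inj; case: h.
Qed.
Local Close Scope ring_scope.

Definition E2 d n (f : {ffun 'I_d -> 'I_n}) (q : ('I_d * 'I_d) * ('I_d * 'I_d)) : bool :=
  [&& (q.1.1 < q.1.2)%N, (q.2.1 < q.2.2)%N, q.1.1 != q.2.1, q.1.1 != q.2.2,
      q.1.2 != q.2.1 & q.1.2 != q.2.2] &&
      [exists x : 'I_n, circ2 (f q.1.1) (f q.1.2) (f q.2.1) (f q.2.2) x].

Lemma card_E2 d n (z : 'I_n) K q : (n <= K * K)%N ->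
  (#|[set f | @E2 d n f q]| <= n ^ d.-1 * K)%N.
Proof.
move=> nK; case: q => [[i j] [i' j']].
case: (boolP [&& (i < j)%N, (i' < j')%N, i != i', i != j', j != i' & j != j']) => h;
  last first.
  rewrite (_ : #|_| = 0%N) //; apply/eq_card0 => f; rewrite !inE /E2 /=.
  by apply: contraNF h => /andP[-> _].
case/and5P: h => ij i'j' ii' ij' /andP[ji' jj'].
have ij0 : i != j by apply/eqP => e; subst; rewrite ltnn in ij.
have i'j'0 : i' != j' by apply/eqP => e; subst; rewrite ltnn in i'j'.
pose J := i |: (j |: (i' |: [set j'])).
have cJ : #|J| = 4.
  rewrite !cardsU1 !inE cards1 (negbTE ij0) (negbTE ii') (negbTE ij') (negbTE ji').
  by rewrite (negbTE jj') (negbTE i'j'0).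
have cCJ : #|~: J| = (d - 4)%N.
  by have := cardsC J; rewrite card_ord cJ; lia.
have d4 : (4 <= d)%N by have := max_card J; rewrite cJ card_ord.
pose xf (f : {ffun 'I_d -> 'I_n}) := odflt z [pick x | circ2 (f i) (f j) (f i') (f j') x].
have xfP : forall f, f \in [set f | @E2 d n f (i, j, (i', j'))] ->
    circ2 (f i) (f j) (f i') (f j') (xf f).
  move=> f; rewrite inE /E2 /= => /andP[_ /existsP[x hx]].
  by rewrite /xf; case: pickP => [y //|/(_ x)]; rewrite hx.
apply: leq_trans (fiber_bound (z := z) (J := J) (Ws := setX [set: 'I_n] (P3 n))
   (g := fun f => (f i', ((f i, xf f), f j))) _ _) _.
- move=> f f' hf hf' e [e1 e2 e3 e4]; apply/ffunP => x.
  have := congr1 (fun h : {ffun _ -> _} => h x) e; rewrite !ffunE.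
  case: (boolP (x \in J)) => // xJ _.
  have ej' : f j' = f' j'.
    have h1 := xfP _ hf; have h2 := xfP _ hf'.
    rewrite -e1 -e2 -e3 -e4 in h2.
    exact: circ2_uniq h1 h2.
  by move: xJ; rewrite !inE => /orP[/eqP->|/orP[/eqP->|/orP[/eqP->|/eqP->]]].
- move=> f hf; rewrite in_setX inE /=.
  by have := xfP _ hf; rewrite /circ2 => /andP[].
rewrite cCJ cardsX cardsT card_ord.
apply: leq_trans (leq_mul (leqnn _) (leq_mul (leqnn n) (card_P3 nK))) _.
have -> : d.-1 = (d - 4).+3 by lia.
by rewrite !expnS; apply: eq_leq; ring.
Qed.

Local Open Scope ring_scope.
Definition dec d L (lc : {ffun 'I_d -> 'I_(2 * L + 1)}) (i : 'I_d) : int :=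
  (lc i)%:Z - L%:Z.

Definition E3 d L R (f : {ffun 'I_d -> 'I_(2 * R + 1)}) (lc : {ffun 'I_d -> 'I_(2 * L + 1)}) : bool :=
  [exists i, dec lc i != 0] && (\sum_(i < d) dec lc i * toZ f i == 0).

Lemma card_E3 d L R (z : 'I_(2 * R + 1)) lc :
  (#|[set f | @E3 d L R f lc]| <= (2 * R + 1) ^ d.-1)%N.
Proof.
case: (pickP (fun i => dec lc i != 0)) => [i0 hi0 | none]; last first.
  rewrite (_ : #|_| = 0%N) //; apply/eq_card0 => f; rewrite !inE /E3.
  apply/negbTE; rewrite negb_and; apply/orP; left; rewrite negb_exists.
  by apply/forallP => i; rewrite none.
apply: leq_trans (fiber_bound (z := z) (J := [set i0]) (Ws := [set: unit])
   (g := fun f => tt) _ _) _; last first.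
  by rewrite cardsT card_unit muln1 cardsC1 card_ord.
- by move=> f _; rewrite inE.
- move=> f f' hf hf' e _; apply/ffunP => x.
  have := congr1 (fun h : {ffun _ -> _} => h x) e; rewrite !ffunE inE.
  case: (eqVneq x i0) => [-> _|//].
  move: hf hf'; rewrite !inE /E3 => /andP[_ /eqP s1] /andP[_ /eqP s2].
  have : \sum_(i < d) dec lc i * (toZ f i - toZ f' i) = 0.
    under eq_bigr do rewrite mulrBr.
    by rewrite sumrB s1 s2 subr0.
  rewrite (bigD1 i0) //= big1 ?addr0; last first.
    move=> i hi; have := congr1 (fun h : {ffun _ -> _} => h i) e.
    by rewrite !ffunE inE (negbTE hi) /toZ => ->; rewrite subrr mulr0.
  move/eqP; rewrite mulf_eq0 (negbTE hi0) /= subr_eq0 /toZ => /eqP h.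
  move/(congr1 (fun t => t + R%:Z)): h; rewrite !subrK => -[h]; exact: val_inj.
Qed.
Local Close Scope ring_scope.

Local Open Scope ring_scope.
Lemma incr_lt d R (f : {ffun 'I_d -> 'I_(2 * R + 1)}) (i j : 'I_d) :
  increasing (toZ f) -> (i < j)%N -> toZ f i < toZ f j.
Proof. by move=> /forallP/(_ i)/forallP/(_ j)/implyP; apply. Qed.

Lemma incr_rev d R (f : {ffun 'I_d -> 'I_(2 * R + 1)}) (i j : 'I_d) :
  increasing (toZ f) -> toZ f i < toZ f j -> (i < j)%N.
Proof.
move=> inc h; case: (ltngtP i j) => // [ji|e].
  by have := incr_lt inc ji; rewrite ltNge le_eqVlt h orbT.
by have /val_inj ei : val i = val j := e; subst; rewrite ltxx in h.
Qed.

Lemma incr_inj d R (f : {ffun 'I_d -> 'I_(2 * R + 1)}) (i j : 'I_d) :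
  increasing (toZ f) -> toZ f i = toZ f j -> i = j.
Proof.
move=> inc h; case: (ltngtP i j) => [ij|ji|e].
- by have := incr_lt inc ij; rewrite h ltxx.
- by have := incr_lt inc ji; rewrite h ltxx.
- exact: val_inj.
Qed.

Lemma partA d R (f : {ffun 'I_d -> 'I_(2 * R + 1)}) :
  increasing (toZ f) -> ~~ [exists t, E1 f t] ->
  forall p, ~ (inS (toZ f) p /\ inC (toZ f) p).
Proof.
move=> inc noE p [[y [y0 [k ->]]] [i [j [ij hC]]]].
have eq : (toZ f k - toZ f i) * (toZ f k - toZ f j) + y * y = 0.
  by rewrite -expr2; case: hC => -[].
have mij := incr_lt inc ij.
have y2 : 0 < y * y by rewrite -expr2 exprn_even_gt0.
have hik : toZ f i < toZ f k by nia.
have hkj : toZ f k < toZ f j by nia.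
apply: (negP noE); apply/existsP; exists ((i, k), j).
rewrite /E1 /= (incr_rev inc hik) (incr_rev inc hkj) /= inE /=.
move: hik hkj eq; rewrite /toZ => hik hkj eq.
have -> : (f i < f k)%N by lia.
have -> : (f k < f j)%N by lia.
rewrite andbT /=; apply/issqP; exists `|y|%N; nia.
Qed.
Local Close Scope ring_scope.

Local Open Scope ring_scope.
Lemma share d R (f : {ffun 'I_d -> 'I_(2 * R + 1)}) (x y : int) (c b b' : 'I_d) :
  increasing (toZ f) -> y != 0 ->
  (x - toZ f c) * (x - toZ f b) + y * y = 0 ->
  (x - toZ f c) * (x - toZ f b') + y * y = 0 -> b = b'.
Proof.
move=> inc y0 e1 e2.
have hc : x - toZ f c != 0.
  apply/eqP => h; move: e1; rewrite h mul0r add0r => /eqP; rewrite mulf_eq0 orbb.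
  by rewrite (negbTE y0).
have : (x - toZ f c) * (toZ f b' - toZ f b) = 0 by lia.
move/eqP; rewrite mulf_eq0 (negbTE hc) /= subr_eq0 => /eqP h.
exact: (incr_inj inc (esym h)).
Qed.

Lemma inCij_eq d (m : 'I_d -> int) i j p :
  inCij m i j p -> (p.1 - m i) * (p.1 - m j) + p.2 * p.2 = 0 /\ p.2 != 0.
Proof.
by case=> -[e s]; split; rewrite -?expr2 //; apply/eqP => h; rewrite h ?oppr0 ltxx in s.
Qed.

Lemma partB d R (f : {ffun 'I_d -> 'I_(2 * R + 1)}) :
  increasing (toZ f) -> ~~ [exists q, E2 f q] ->
  forall (i j i' j' : 'I_d) p, (i < j)%N -> (i' < j')%N ->
     [set i; j] != [set i'; j'] -> ~ (inCij (toZ f) i j p /\ inCij (toZ f) i' j' p).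
Proof.
move=> inc noE i j i' j' [x y] ij i'j' neq [/inCij_eq [e1 y0] /inCij_eq [e2 _]].
move: e1 e2 y0; rewrite /= => e1 e2 y0.
have e1' : (x - toZ f j) * (x - toZ f i) + y * y = 0 by rewrite mulrC.
have e2' : (x - toZ f j') * (x - toZ f i') + y * y = 0 by rewrite mulrC.
case: (eqVneq i i') => [eii'|nii'].
  subst i'; have ejj := share inc y0 e1 e2; subst j'.
  by rewrite eqxx in neq.
case: (eqVneq i j') => [eij'|nij'].
  subst j'; have eji := share inc y0 e1 e2'; subst i'.
  by rewrite setUC eqxx in neq.
case: (eqVneq j i') => [eji'|nji'].
  subst i'; have eij := share inc y0 e1' e2; subst j'.
  by rewrite setUC eqxx in neq.
case: (eqVneq j j') => [ejj'|njj'].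
  subst j'; have eii := share inc y0 e1' e2'; subst i'.
  by rewrite eqxx in neq.
have mij := incr_lt inc ij.
have y2 : 0 < y * y by rewrite -expr2 exprn_even_gt0.
have hix : toZ f i < x by nia.
have hxj : x < toZ f j by nia.
have fj := ltn_ord (f j).
have hx : (absz (x + R%:Z)%R < 2 * R + 1)%N.
  by move: hix hxj; rewrite /toZ => hix hxj; lia.
pose xo : 'I_(2 * R + 1) := Ordinal hx.
have hxo : (xo : nat)%:Z = x + R%:Z by rewrite /=; move: hix; rewrite /toZ => hix; lia.
apply: (negP noE); apply/existsP; exists ((i, j), (i', j')).
rewrite /E2 /= ij i'j' nii' nij' nji' njj' /=.
apply/existsP; exists xo; rewrite /circ2 inE /=.
move: hix hxj e1 e2; rewrite /toZ => hix hxj e1 e2.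
have -> : (f i < xo)%N by lia.
have -> : (xo < f j)%N by lia.
rewrite /= andbT; apply/andP; split.
  by apply/issqP; exists `|y|%N; nia.
apply/eqP.
have -> : (((xo - f i) * (f j - xo))%N : int) = y * y.
  rewrite PoszM -!subzn; [|lia|lia]; rewrite hxo; lia.
rewrite hxo; lia.
Qed.
Local Close Scope ring_scope.

Local Open Scope ring_scope.
Lemma partC d L R (f : {ffun 'I_d -> 'I_(2 * R + 1)}) :
  ~~ [exists lc, @E3 d L R f lc] ->
  forall l : 'I_d -> int,
     (0 < \sum_(i < d) `|l i|)%N -> (\sum_(i < d) `|l i| <= L)%N ->
     \sum_(i < d) l i * toZ f i != 0.
Proof.
move=> noE l s0 sL; apply/negP => /eqP hs.
have hl : forall i, (`|l i| <= L)%N.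
  by move=> i; apply: leq_trans sL; rewrite (bigD1 i) //= leq_addr.
have hb : forall i, (absz (l i + L%:Z)%R < 2 * L + 1)%N.
  by move=> i; have := hl i; lia.
pose lc : {ffun 'I_d -> 'I_(2 * L + 1)} := [ffun i => Ordinal (hb i)].
have decE : forall i, dec lc i = l i.
  by move=> i; rewrite /dec ffunE /=; have := hl i; lia.
apply: (negP noE); apply/existsP; exists lc; rewrite /E3.
apply/andP; split.
  apply/existsP; case: (pickP (fun i => l i != 0)) => [i hi|none].
    by exists i; rewrite decE.
  move: s0; rewrite big1 // => i _; have := none i; rewrite /=.
  by move/negbFE/eqP->.
by apply/eqP; under eq_bigr do rewrite decE.
Qed.
Local Close Scope ring_scope.

Lemma card_ex (X W : finType) (P : X -> W -> bool) :
  (#|[set x | [exists w, P x w]]| <= \sum_(w : W) #|[set x | P x w]|)%N.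
Proof.
have cE : forall w, #|[set x | P x w]| = (\sum_(x : X) (if P x w then 1 else 0))%N.
  by move=> w; rewrite -sum1_card big_mkcond; apply: eq_bigr => x _; rewrite inE.
under eq_bigr do rewrite cE.
rewrite exchange_big /= -sum1_card big_mkcond /=.
apply: leq_sum => x _; rewrite inE.
case: (boolP [exists w, P x w]) => // /existsP[w hw].
by rewrite (bigD1 w) //= hw leq_addr.
Qed.

Definition Bad d L R : {set {ffun 'I_d -> 'I_(2 * R + 1)}} :=
  [set f | [exists t, E1 f t]] :|: [set f | [exists q, E2 f q]] :|:
  [set f | [exists lc, @E3 d L R f lc]].

Lemma card_Bad d L R K : (2 * R + 1 <= K * K)%N ->
  (#|Bad d L R| <= (d ^ 3 * K + d ^ 4 * K + (2 * L + 1) ^ d) * (2 * R + 1) ^ d.-1)%N.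
Proof.
move=> nK.
have z : 'I_(2 * R + 1) by apply: (@Ordinal _ 0); rewrite addn1.
rewrite /Bad !mulnDl.
apply: leq_trans (leq_card_setU _ _).1 _; apply: leq_add.
  apply: leq_trans (leq_card_setU _ _).1 _; apply: leq_add.
    apply: leq_trans (card_ex _) _.
    apply: (@leq_trans (\sum_(t : 'I_d * 'I_d * 'I_d) (2 * R + 1) ^ d.-1 * K)%N).
      apply: leq_sum => t _; apply: leq_trans (card_E1 z t nK); apply: eq_leq.
      by apply: eq_card => f; rewrite !inE.
    by rewrite sum_nat_const !card_prod card_ord; apply: eq_leq; ring.
  apply: leq_trans (card_ex _) _.
  apply: (@leq_trans (\sum_(t : ('I_d * 'I_d) * ('I_d * 'I_d)) (2 * R + 1) ^ d.-1 * K)%N).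
    apply: leq_sum => t _; apply: leq_trans (card_E2 z t nK); apply: eq_leq.
    by apply: eq_card => f; rewrite !inE.
  by rewrite sum_nat_const !card_prod card_ord; apply: eq_leq; ring.
apply: leq_trans (card_ex _) _.
apply: (@leq_trans (\sum_(t : {ffun 'I_d -> 'I_(2 * L + 1)}) (2 * R + 1) ^ d.-1)%N).
  apply: leq_sum => t _; apply: leq_trans (card_E3 z t); apply: eq_leq.
  by apply: eq_card => f; rewrite !inE.
by rewrite sum_nat_const card_ffun !card_ord.
Qed.

Lemma BG_sub d L R : B_R d R :\: G_R d L R \subset Bad d L R.
Proof.
apply/subsetP => f; rewrite !inE => /andP[notG inB].
apply/negPn/negP; rewrite !negb_or => /andP[/andP[n1 n2] n3].
move: notG; rewrite inB /=; apply/negP/negPn; apply: asboolT.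
split; first split.
- exact: partA.
- exact: partB.
- exact: partC.
Qed.

Lemma card_B_lb d R : (0 < d)%N -> (((2 * R + 1) %/ d) ^ d <= #|B_R d R|)%N.
Proof.
move=> d0; set M := ((2 * R + 1) %/ d).
have dM : (d * M <= 2 * R + 1)%N by rewrite mulnC leq_trunc_div.
have z : 'I_(2 * R + 1) by apply: (@Ordinal _ 0); rewrite addn1.
pose h (g : {ffun 'I_d -> 'I_M}) : {ffun 'I_d -> 'I_(2 * R + 1)} :=
  [ffun i : 'I_d => insubd z (i * M + g i)%N].
have hv : forall g (i : 'I_d), val (h g i) = (i * M + g i)%N.
  move=> g i; rewrite ffunE insubdK // /in_mem /=.
  apply: leq_trans dM; have := ltn_ord i; have := ltn_ord (g i); nia.
have -> : (M ^ d = #|[set: {ffun 'I_d -> 'I_M}]|)%N by rewrite cardsT card_ffun !card_ord.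
apply: (inj_bound (h := h)).
  move=> g g' _ _ e; apply/ffunP => i.
  have := hv g i; rewrite e hv => /eqP; rewrite eqn_add2l => /eqP e2.
  exact: val_inj.
move=> g _; rewrite inE; apply/forallP => i; apply/forallP => j; apply/implyP => ij.
rewrite /toZ !hv.
have := ltn_ord (g i); have := ltn_ord (g j).
move=> gj gi.
have : (i * M + g i < j * M + g j)%N by nia.
by rewrite ltrD2r ltz_nat.
Qed.

Lemma nat_core d L R t : (1 <= d)%N -> (0 < t)%N ->
  (d * (t * (2 * d * t + 1)) <= R)%N ->
  (#|B_R d R :\: G_R d L R| * t <=
     ((d ^ 3 + d ^ 4 + (2 * L + 1) ^ d) * (2 * d) ^ d.-1) * #|B_R d R|)%N.
Proof.
move=> d1 t0 hR.
set n := (2 * R + 1)%N.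
set M := (n %/ d)%N.
have hW : (t * (2 * d * t + 1) <= M)%N.
  rewrite /M; apply: leq_trans (_ : (d * (t * (2 * d * t + 1))) %/ d <= _)%N.
    by rewrite mulKn.
  by apply: leq_div2r; rewrite /n; lia.
set K := (M %/ t)%N.
have hK : (2 * d * t + 1 <= K)%N.
  rewrite /K; apply: leq_trans (_ : (t * (2 * d * t + 1)) %/ t <= _)%N.
    by rewrite mulKn.
  exact: leq_div2r.
have eM : M = (K * t + M %% t)%N by rewrite /K -divn_eq.
have rt : (M %% t < t)%N by rewrite ltn_mod.
have nlt : (n < M.+1 * d)%N by rewrite /M ltn_ceil.
have M1 : (1 <= M)%N by apply: leq_trans hW; nia.
have n2 : (n <= 2 * d * M)%N by nia.
have nK : (n <= K * K)%N.
  apply: leq_trans n2 _.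
  set r := (M %% t) in eM rt.
  rewrite eM; nia.
have tK : (t * K <= M)%N by rewrite eM; nia.
set C := (d ^ 3 + d ^ 4 + (2 * L + 1) ^ d)%N.
have h1 : (#|B_R d R :\: G_R d L R| <= C * K * n ^ d.-1)%N.
  apply: leq_trans (subset_leq_card (BG_sub d L R)) _.
  have cb := @card_Bad d L R K nK. apply: leq_trans cb _.
  rewrite /C leq_mul2r; apply/orP; right.
  have K1 : (1 <= K)%N by lia.
  rewrite !mulnDl leq_add2l; rewrite -[X in (X <= _)%N]muln1.
  by rewrite leq_mul2l K1 orbT.
have h2 : (n ^ d.-1 <= (2 * d) ^ d.-1 * M ^ d.-1)%N.
  rewrite -expnMn; case: (d.-1) => [|e] //; rewrite leq_exp2r // mulnA.
have hB := card_B_lb R (d1 : (0 < d)%N).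
rewrite -/n -/M in hB.
apply: leq_trans (_ : C * (2 * d) ^ d.-1 * M ^ d <= _)%N; last first.
  by rewrite leq_mul2l hB orbT.
apply: leq_trans (leq_mul h1 (leqnn t)) _.
have eMd : (M ^ d = M ^ d.-1 * M)%N.
  by rewrite -expnSr; congr (_ ^ _); lia.
rewrite eMd.
apply: leq_trans (_ : C * K * ((2 * d) ^ d.-1 * M ^ d.-1) * t <= _)%N.
  by rewrite leq_mul2r leq_mul2l h2 !orbT.
apply: leq_trans (_ : C * (2 * d) ^ d.-1 * M ^ d.-1 * (t * K) <= _)%N.
  by apply: eq_leq; ring.
by rewrite -!mulnA !leq_mul2l tK !orbT.
Qed.

Unset Implicit Arguments.
Local Open Scope ring_scope.
Theorem lemma2p5 (d L : nat) : (1 <= d)%N ->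
  forall eps : rat, 0 < eps ->
  exists N : nat, forall R : nat, (N <= R)%N ->
    `| (#|G_R d L R|)%:R / (#|B_R d R|)%:R - 1 | < eps.
Proof.
move=> d1 eps e0.
set C' := ((d ^ 3 + d ^ 4 + (2 * L + 1) ^ d) * (2 * d) ^ d.-1)%N.
have hge : 0 <= C'%:R / eps :> rat by rewrite divr_ge0 // ltW.
have hb := archi_boundP hge.
set t := (Num.bound (C'%:R / eps)).+1.
have ht : C'%:R / eps < t%:R :> rat.
  apply: lt_le_trans hb _; rewrite ler_nat /t; exact: leqnSn.
exists (d * (t * (2 * d * t + 1)))%N => R hR.
have hc := nat_core L d1 (ltn0Sn _ : (0 < t)%N) hR.
set x := #|B_R d R :\: G_R d L R| in hc.
set b := #|B_R d R| in hc *.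
set g := #|G_R d L R|.
have b0 : (0 < b)%N.
  apply: leq_trans (card_B_lb R (d1 : (0 < d)%N)); rewrite expn_gt0 divn_gt0 //.
  apply/orP; left; nia.
have GB : G_R d L R \subset B_R d R by apply/subsetP => f; rewrite inE => /andP[].
have ex : x = (b - g)%N by rewrite /x cardsD (setIidPr GB).
have gb : (g <= b)%N by exact: subset_leq_card.
have eg : g%:R = b%:R - x%:R :> rat by rewrite ex natrB // subKr.
have b0' : 0 < b%:R :> rat by rewrite ltr0n.
have E : g%:R / b%:R - 1 = - (x%:R / b%:R) :> rat.
  by rewrite eg mulrBl divff ?lt0r_neq0 //; ring.
rewrite E normrN ger0_norm ?divr_ge0 ?ler0n //.
rewrite ltr_pdivrMr //.
have hc' : x%:R * t%:R <= C'%:R * b%:R :> rat by rewrite -!natrM ler_nat.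
rewrite ltr_pdivrMr // in ht.
have t0 : 0 < t%:R :> rat by rewrite ltr0n.
nra.
Qed.
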